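(* Every continuous valuation $\nu$ on a topological space $X$ that takes only finitely many distinct values is point-continuous.
   Context: A valuation on $X$ is a map $\nu:\mathcal OX\to[0,\infty]$ with $\nu(\emptyset)=0$, monotone and modular; continuous if it preserves directed suprema of opens. A valuation $\nu$ is point-continuous if for every open $U$ and every real $r$ with $0\le r<\nu(U)$ there is a finite subset $A\subseteq U$ such that $\nu(V)>r$ for every open $V\supseteq A$. *)

(* Defs.v *)
From mathcomp Require Import all_boot all_order all_algebra.
From mathcomp Require Import all_classical all_reals topology ereal.
Set Implicit Arguments. Unset Strict Implicit. Unset Printing Implicit Defensive.
Import Order.TTheory GRing.Theory Num.Theory.
Local Open Scope classical_set_scope.
Local Open Scope ring_scope.
Local Open Scope ereal_scope.

(* A valuation on the opens of a topological space X, with values in [0, +oo].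
   nu is given as a map on all subsets, but only its values on opens matter. *)
Definition valuation (R : realType) (X : topologicalType) (nu : set X -> \bar R) : Prop :=
  [/\ nu set0 = 0,
      (forall U, open U -> 0 <= nu U),
      (forall U V, open U -> open V -> U `<=` V -> nu U <= nu V) &
      (forall U V, open U -> open V -> nu (U `|` V) + nu (U `&` V) = nu U + nu V)].

Definition directed_open_family (X : topologicalType) (D : set (set X)) : Prop :=
  [/\ D !=set0,
      (forall U, D U -> open U) &
      (forall U V, D U -> D V -> exists2 W, D W & U `|` V `<=` W)].

Definition continuous_valuation (R : realType) (X : topologicalType)
  (nu : set X -> \bar R) : Prop :=
  valuation nu /\
  forall D : set (set X), directed_open_family D ->
    nu (\bigcup_(U in D) U) = ereal_sup (nu @` D).

Definition point_continuous (R : realType) (X : topologicalType)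
  (nu : set X -> \bar R) : Prop :=
  forall (U : set X) (r : R), open U -> (0 <= r)%R -> r%:E < nu U ->
    exists A : set X, [/\ finite_set A, A `<=` U &
      forall V : set X, open V -> A `<=` V -> r%:E < nu V].

(* Main.v *)
Require Import Defs.
From mathcomp Require Import all_boot all_order all_algebra.
From mathcomp Require Import all_classical all_reals topology ereal.
Local Open Scope classical_set_scope.

Import Order.TTheory GRing.Theory Num.Theory.

Section Aux.
Local Open Scope ereal_scope.

Lemma seq_min_ereal (R : realType) (s : seq (\bar R)) (S : set (\bar R)) :
  S `<=` [set` s] -> S !=set0 -> exists2 x, S x & forall y, S y -> x <= y.
Proof.
elim: s S => [|a s IH] S sub [z Sz]; first by have := sub z Sz.
have [[w [Sw ws]]|N] := pselect ((S `&` [set` s]) !=set0).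
  have [m [Sm _] hm] := IH (S `&` [set` s]) (@subIsetr _ _ _) (ex_intro _ w (conj Sw ws)).
  have [Sa|nSa] := pselect (S a).
    have [am|ma] := ltP a m.
      exists a => // y Sy; have := sub y Sy; rewrite /= inE => /orP[/eqP->//|ys].
      by apply: le_trans (ltW am) (hm y (conj Sy ys)).
    exists m => // y Sy; have := sub y Sy; rewrite /= inE => /orP[/eqP->//|ys].
    exact: hm.
  exists m => // y Sy; have := sub y Sy; rewrite /= inE => /orP[/eqP ya|ys].
    by rewrite ya in Sy.
  exact: hm.
have allA : forall y, S y -> y = a.
  move=> y Sy; have := sub y Sy; rewrite /= inE => /orP[/eqP//|ys].
  by exfalso; apply: N; exists y.
by exists a; [rewrite -(allA z Sz) | move=> y /allA ->].
Qed.

Lemma seq_max_ereal (R : realType) (s : seq (\bar R)) (S : set (\bar R)) :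
  S `<=` [set` s] -> S !=set0 -> exists2 x, S x & forall y, S y -> y <= x.
Proof.
elim: s S => [|a s IH] S sub [z Sz]; first by have := sub z Sz.
have [[w [Sw ws]]|N] := pselect ((S `&` [set` s]) !=set0).
  have [m [Sm _] hm] := IH (S `&` [set` s]) (@subIsetr _ _ _) (ex_intro _ w (conj Sw ws)).
  have [Sa|nSa] := pselect (S a).
    have [am|ma] := ltP m a.
      exists a => // y Sy; have := sub y Sy; rewrite /= inE => /orP[/eqP->//|ys].
      by apply: le_trans (hm y (conj Sy ys)) (ltW am).
    exists m => // y Sy; have := sub y Sy; rewrite /= inE => /orP[/eqP->//|ys].
    exact: hm.
  exists m => // y Sy; have := sub y Sy; rewrite /= inE => /orP[/eqP ya|ys].
    by rewrite ya in Sy.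
  exact: hm.
have allA : forall y, S y -> y = a.
  move=> y Sy; have := sub y Sy; rewrite /= inE => /orP[/eqP//|ys].
  by exfalso; apply: N; exists y.
by exists a; [rewrite -(allA z Sz) | move=> y /allA ->].
Qed.

Lemma fin_min (R : realType) (F S : set (\bar R)) : finite_set F -> S `<=` F ->
  S !=set0 -> exists2 x, S x & forall y, S y -> x <= y.
Proof.
move=> /finite_seqP [s Fs] SF; apply: (@seq_min_ereal _ s); by move=> x /SF; rewrite Fs.
Qed.

Lemma fin_max (R : realType) (F S : set (\bar R)) : finite_set F -> S `<=` F ->
  S !=set0 -> exists2 x, S x & forall y, S y -> y <= x.
Proof.
move=> /finite_seqP [s Fs] SF; apply: (@seq_max_ereal _ s); by move=> x /SF; rewrite Fs.
Qed.

End Aux.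

Theorem proposition4p4 (R : realType) (X : topologicalType) (nu : set X -> \bar R) :
  continuous_valuation nu ->
  finite_set (nu @` [set U : set X | open U]) ->
  point_continuous nu.
Proof.
move=> [[nu0 nu_ge0 numon numod] nucont] fin U r oU r0 rU.
apply: contrapT => H.
have H' : forall A, finite_set A -> A `<=` U -> exists V,
    [/\ open V, A `<=` V, V `<=` U & (nu V <= r%:E)%E].
  move=> A fA AU; apply: contrapT => N; apply: H; exists A; split => // V oV AV.
  rewrite ltNge; apply/negP => Vr; apply: N; exists (V `&` U); split.
  - exact: openI.
  - by move=> x Ax; split; [apply: AV | apply: AU].
  - exact: subIsetr.
  - apply: le_trans Vr; apply: numon => //; first exact: openI; exact: subIsetl.
pose ismin (A : set X) (m : \bar R) :=
  (exists V, [/\ open V, A `<=` V, V `<=` U & nu V = m]) /\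
  (forall V, open V -> A `<=` V -> V `<=` U -> (m <= nu V)%E).
have minA : forall A, A `<=` U -> exists m, ismin A m.
  move=> A AU.
  have sub : nu @` [set V | [/\ open V, A `<=` V & V `<=` U]] `<=`
      nu @` [set U : set X | open U].
    by move=> _ [V [oV _ _] <-]; exists V.
  have ne : nu @` [set V | [/\ open V, A `<=` V & V `<=` U]] !=set0.
    by exists (nu U); exists U => //; split.
  have [m [V [oV AV VU] <-] hm] := @fin_min _ _ _ fin sub ne.
  exists (nu V); split; first by exists V.
  by move=> W oW AW WU; apply: hm; exists W.
pose S2 := [set m | exists A, [/\ finite_set A, A `<=` U & ismin A m]].
have S2F : S2 `<=` nu @` [set U : set X | open U].
  by move=> m [A [_ _ [[V [oV _ _ <-]] _]]]; exists V.
have S2ne : S2 !=set0.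
  have [m hm] := minA set0 (sub0set _).
  by exists m; exists set0; split => //; exact: finite_set0.
have [m0 [A0 [fA0 A0U hA0]] hmax] := @fin_max _ _ _ fin S2F S2ne.
have key : forall A, finite_set A -> A0 `<=` A -> A `<=` U -> ismin A m0.
  move=> A fA A0A AU; have [m hm] := minA A AU.
  suff -> : m0 = m by [].
  apply/le_anti/andP; split.
    have [[V [oV AV VU <-]] _] := hm.
    by apply: hA0.2 => //; apply: subset_trans AV.
  by apply: hmax; exists A.
have m0r : (m0 <= r%:E)%E.
  have [V [oV AV VU Vr]] := H' A0 fA0 A0U.
  by apply: le_trans Vr; apply: hA0.2.
have m00 : (0 <= m0)%E.
  by have [[V [oV _ _ <-]] _] := hA0; apply: nu_ge0.
pose D := [set V | [/\ open V, A0 `<=` V, V `<=` U & nu V = m0]].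
have dirD : directed_open_family D.
  split.
  - by have [[V hV] _] := hA0; exists V.
  - by move=> V [].
  move=> V1 V2 [o1 a1 u1 n1] [o2 a2 u2 n2]; exists (V1 `|` V2) => //.
  have oU12 : open (V1 `|` V2) by exact: openU.
  have hI : nu (V1 `&` V2) = m0.
    apply/le_anti/andP; split.
      rewrite -n1; apply: numon; [exact: openI | exact: o1 | exact: subIsetl].
    apply: hA0.2.
    - exact: openI.
    - by move=> x Ax; split; [apply: a1|apply: a2].
    - by apply: subset_trans u1; exact: subIsetl.
  split => //.
  - by move=> x /a1 ?; left.
  - by move=> x [/u1|/u2].
  have := numod V1 V2 o1 o2; rewrite hI n1 n2.
  have m0fin : m0 = (fine m0)%:E.
    by rewrite fineK // ge0_fin_numE // (le_lt_trans m0r) // ltry.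
  rewrite m0fin; case: (nu (V1 `|` V2)) => [w||] //=.
  by move=> [] /addIr ->.
have bigD : \bigcup_(V in D) V = U.
  apply/seteqP; split; first by move=> x [V [_ _ VU _]] /VU.
  move=> x Ux.
  have AxU : A0 `|` [set x] `<=` U by move=> y [/A0U //| ->].
  have [[V [oV AV VU nV]] _] := key (A0 `|` [set x])
    (ltac:(by rewrite finite_setU; split => //; exact: finite_set1)) (@subsetUl _ _ _)
    AxU.
  exists V; first by split => //; apply: subset_trans AV; exact: subsetUl.
  by apply: AV; right.
have := nucont D dirD; rewrite bigD.
have -> : nu @` D = [set m0].
  apply/seteqP; split; first by move=> _ [V [_ _ _ <-] <-].
  move=> y yE; rewrite yE; have [[V hV] _] := hA0; exists V => //; by case: hV.
rewrite ereal_sup1 => nuU.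
by move: rU; rewrite nuU ltNge m0r.
Qed.
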